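(* Let $(X,d)$ be a compact metric space and $f_{1,\infty}$ a commutative $m$-periodic sequence of continuous surjective self-maps of $X$. Then $(X,f_{1,\infty})$ is weakly mixing if and only if $(X,f_{1,\infty}^{[k]})$ is weakly mixing for every $k\ge1$.
   Context: Commutative: $f_i\circ f_j=f_j\circ f_i$ for all $i,j$. $m$-periodic: $f_{n+m}=f_n$ for all $n\ge1$. Write $f_n^i=f_{n+i-1}\circ\cdots\circ f_n$, $f_1^n=f_n\circ\cdots\circ f_1$, and $f_{1,\infty}^{[k]}=\{f_{k(n-1)+1}^k\}_{n=1}^\infty$ (whose $n$-fold composition is $f_1^{kn}$). A non-autonomous system $(Y,g_{1,\infty})$ is weakly mixing if for all non-empty open $U_1,U_2,V_1,V_2$ there is $n$ with $g_1^n(U_i)\cap V_i\ne\emptyset$, $i=1,2$. *)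

(* Defs.v *)
From Stdlib Require Import Reals List Arith.
Open Scope R_scope.

Definition is_metric {X : Type} (d : X -> X -> R) : Prop :=
  (forall x y, 0 <= d x y) /\
  (forall x y, d x y = 0 <-> x = y) /\
  (forall x y, d x y = d y x) /\
  (forall x y z, d x z <= d x y + d y z).

Definition is_open {X : Type} (d : X -> X -> R) (U : X -> Prop) : Prop :=
  forall x, U x -> exists eps, 0 < eps /\ forall y, d x y < eps -> U y.

Definition is_compact {X : Type} (d : X -> X -> R) : Prop :=
  forall (I : Type) (U : I -> X -> Prop),
    (forall i, is_open d (U i)) ->
    (forall x, exists i, U i x) ->
    exists l : list I, forall x, exists i, In i l /\ U i x.

Definition continuous_map {X : Type} (d : X -> X -> R) (g : X -> X) : Prop :=
  forall x eps, 0 < eps ->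
    exists delta, 0 < delta /\ forall y, d x y < delta -> d (g x) (g y) < eps.

Definition surjective_map {X : Type} (g : X -> X) : Prop :=
  forall y, exists x, g x = y.

(* Sequences f_1, f_2, ... are functions nat -> (X -> X); index 0 is unused. *)

Fixpoint comp {X : Type} (f : nat -> X -> X) (a n : nat) (x : X) : X :=
  match n with
  | O => x
  | S n' => f (a + n')%nat (comp f a n' x)
  end.

Definition commutative_seq {X : Type} (f : nat -> X -> X) : Prop :=
  forall i j x, (1 <= i)%nat -> (1 <= j)%nat -> f i (f j x) = f j (f i x).

Definition periodic_seq {X : Type} (f : nat -> X -> X) (m : nat) : Prop :=
  forall n x, (1 <= n)%nat -> f (n + m)%nat x = f n x.

Definition block_seq {X : Type} (f : nat -> X -> X) (k : nat) : nat -> X -> X :=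
  fun n => comp f (k * (n - 1) + 1)%nat k.

Definition weakly_mixing {X : Type} (d : X -> X -> R) (g : nat -> X -> X) : Prop :=
  forall U1 U2 V1 V2 : X -> Prop,
    is_open d U1 -> is_open d U2 -> is_open d V1 -> is_open d V2 ->
    (exists x, U1 x) -> (exists x, U2 x) -> (exists x, V1 x) -> (exists x, V2 x) ->
    exists n, (1 <= n)%nat /\
      (exists x, U1 x /\ V1 (comp g 1 n x)) /\
      (exists x, U2 x /\ V2 (comp g 1 n x)).

(* Main.v *)
Require Import Defs.
From Stdlib Require Import Reals List Arith Lia.
Local Notation comp := Defs.comp.
Open Scope R_scope.

Lemma comp_split {X} (f : nat -> X -> X) (a n p : nat) (x : X) :
  comp f a (n + p)%nat x = comp f (a + n)%nat p (comp f a n x).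
Proof.
  induction p as [|p IH].
  - rewrite Nat.add_0_r. reflexivity.
  - rewrite Nat.add_succ_r. simpl. rewrite IH.
    replace (a + n + p)%nat with (a + (n + p))%nat by lia. reflexivity.
Qed.

Lemma per_iter {X} (f : nat -> X -> X) m (Hper : periodic_seq f m) :
  forall q j x, (1 <= j)%nat -> f (j + m*q)%nat x = f j x.
Proof.
  induction q; intros j x Hj.
  - rewrite Nat.mul_0_r, Nat.add_0_r; reflexivity.
  - replace (j + m * S q)%nat with ((j + m*q) + m)%nat by lia.
    rewrite Hper by lia. apply IHq; assumption.
Qed.

Lemma comp_per {X} (f : nat -> X -> X) m (Hper : periodic_seq f m) :
  forall q a n x, (1 <= a)%nat -> comp f (a + m*q)%nat n x = comp f a n x.
Proof.
  intros q a n x Ha; induction n; simpl; [reflexivity|].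
  rewrite IHn. replace (a + m*q + n)%nat with ((a+n) + m*q)%nat by lia.
  apply per_iter; [assumption|lia].
Qed.

Lemma comm1 {X} (f : nat -> X -> X) (Hc : commutative_seq f) :
  forall j a n x, (1<=j)%nat -> (1<=a)%nat -> f j (comp f a n x) = comp f a n (f j x).
Proof.
  intros j a n x Hj Ha; induction n; simpl; [reflexivity|].
  rewrite Hc by lia. rewrite IHn. reflexivity.
Qed.

Lemma comm2 {X} (f : nat -> X -> X) (Hc : commutative_seq f) :
  forall a b n p x, (1<=a)%nat -> (1<=b)%nat ->
  comp f a n (comp f b p x) = comp f b p (comp f a n x).
Proof.
  intros a b n p x Ha Hb; induction p; simpl; [reflexivity|].
  rewrite <- comm1 by (auto; lia). rewrite IHp. reflexivity.
Qed.

Lemma cont_comp_map {X} (d : X -> X -> R) (g h : X -> X) :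
  continuous_map d g -> continuous_map d h -> continuous_map d (fun x => g (h x)).
Proof.
  intros Hg Hh x eps He.
  destruct (Hg (h x) eps He) as [d1 [Hd1 H1]].
  destruct (Hh x d1 Hd1) as [d2 [Hd2 H2]].
  exists d2; split; auto.
Qed.

Lemma cont_comp {X} (d : X -> X -> R) (f : nat -> X -> X)
  (Hcont : forall n, (1<=n)%nat -> continuous_map d (f n)) :
  forall a n, (1<=a)%nat -> continuous_map d (comp f a n).
Proof.
  intros a n Ha; induction n.
  - intros x eps He; exists eps; split; auto.
  - apply (cont_comp_map d (f (a+n)%nat) (comp f a n)); auto. apply Hcont; lia.
Qed.

Lemma surj_comp {X} (f : nat -> X -> X) (Hs : forall n, (1<=n)%nat -> surjective_map (f n)) :
  forall a n y, (1<=a)%nat -> exists x, comp f a n x = y.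
Proof.
  intros a n; induction n; intros y Ha; simpl.
  - exists y; reflexivity.
  - destruct (Hs (a+n)%nat ltac:(lia) y) as [z Hz].
    destruct (IHn z Ha) as [x Hx]. exists x. rewrite Hx. exact Hz.
Qed.

Lemma open_pre {X} (d : X -> X -> R) (g : X -> X) (V : X -> Prop) :
  continuous_map d g -> is_open d V -> is_open d (fun x => V (g x)).
Proof.
  intros Hg HV x Hx. destruct (HV _ Hx) as [e [He H]].
  destruct (Hg x e He) as [dl [Hdl H2]]. exists dl; split; auto.
Qed.

Lemma open_inter {X} (d : X -> X -> R) (A B : X -> Prop) :
  is_open d A -> is_open d B -> is_open d (fun x => A x /\ B x).
Proof.
  intros HA HB x [Ax Bx]. destruct (HA x Ax) as [e1 [He1 H1]].
  destruct (HB x Bx) as [e2 [He2 H2]].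
  exists (Rmin e1 e2). split. apply Rmin_pos; auto.
  intros y Hy. split.
  - apply H1. apply Rlt_le_trans with (Rmin e1 e2); [exact Hy| apply Rmin_l].
  - apply H2. apply Rlt_le_trans with (Rmin e1 e2); [exact Hy| apply Rmin_r].
Qed.

Definition hits {X} (f : nat -> X -> X) (A B : X -> Prop) (n : nat) :=
  exists x, A x /\ B (comp f 1 n x).
Definition nopen {X} (d : X -> X -> R) (A : X -> Prop) := is_open d A /\ exists x, A x.

Lemma key {X} (d : X -> X -> R) (f : nat -> X -> X)
  (Hc : commutative_seq f) (Hcont : forall n, (1<=n)%nat -> continuous_map d (f n))
  (Hwm : weakly_mixing d f) (A B U V : X -> Prop) :
  nopen d A -> nopen d B -> nopen d U -> nopen d V ->
  exists A' B', nopen d A' /\ nopen d B' /\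
   forall n, hits f A' B' n -> hits f A B n /\ hits f U V n.
Proof.
  intros [HA eA] [HB eB] [HU eU] [HV eV].
  destruct (Hwm A B U V HA HB HU HV eA eB eU eV) as [p [Hp [[x [Ax Ux]] [y [By Vy]]]]].
  assert (Hcp : continuous_map d (comp f 1 p)) by (apply cont_comp; auto).
  exists (fun z => A z /\ U (comp f 1 p z)), (fun z => B z /\ V (comp f 1 p z)).
  split; [split; [apply open_inter; auto; apply open_pre; auto | exists x; auto]|].
  split; [split; [apply open_inter; auto; apply open_pre; auto | exists y; auto]|].
  intros n [z [[Az Uz] [Bz Vz]]]. split.
  - exists z; auto.
  - exists (comp f 1 p z); split; auto. rewrite comm2 by (auto; lia). exact Vz.
Qed.

Lemma family {X} (d : X -> X -> R) (f : nat -> X -> X)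
  (Hc : commutative_seq f) (Hcont : forall n, (1<=n)%nat -> continuous_map d (f n))
  (Hwm : weakly_mixing d f) (Us Vs : nat -> X -> Prop)
  (HUs : forall s, nopen d (Us s)) (HVs : forall s, nopen d (Vs s)) (A B : X -> Prop) :
  nopen d A -> nopen d B -> forall N,
  exists A' B', nopen d A' /\ nopen d B' /\ (forall n, hits f A' B' n -> hits f A B n) /\
   forall s, (s < N)%nat -> forall n, hits f A' B' n -> hits f (Us s) (Vs s) n.
Proof.
  intros HA HB N; induction N.
  - exists A, B. split; [auto|split;[auto|split;[intros n H; exact H|intros s Hs; lia]]].
  - destruct IHN as [A1 [B1 [H1 [H2 [H3 H4]]]]].
    destruct (key d f Hc Hcont Hwm A1 B1 (Us N) (Vs N) H1 H2 (HUs N) (HVs N))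
      as [A2 [B2 [G1 [G2 G3]]]].
    exists A2, B2. split; [auto|split;[auto|split]].
    + intros n Hn. apply H3, (G3 n Hn).
    + intros s Hs n Hn. destruct (Nat.eq_dec s N) as [->|Hne].
      * apply (G3 n Hn).
      * apply (H4 s ltac:(lia) n). apply (G3 n Hn).
Qed.

Lemma block_comp {X} (f : nat -> X -> X) k : forall N x,
  comp (block_seq f k) 1 N x = comp f 1 (k*N) x.
Proof.
  induction N; intros x.
  - rewrite Nat.mul_0_r; reflexivity.
  - change (comp (block_seq f k) 1 (S N) x) with
      (block_seq f k (1+N)%nat (comp (block_seq f k) 1 N x)).
    rewrite IHN. unfold block_seq.
    replace (k*(1+N-1)+1)%nat with (1+k*N)%nat by lia.
    rewrite <- comp_split. f_equal. lia.
Qed.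

Lemma shift_id {X} (f : nat -> X -> X) m (Hper : periodic_seq f m) k q s x :
  (s <= k*m)%nat ->
  comp f (1+s) (k*m - s) (comp f 1 (k*m*q + s) x) = comp f 1 (k*m*(q+1)) x.
Proof.
  intros Hs.
  rewrite comp_split.
  replace (1 + k*m*q)%nat with (1 + m*(k*q))%nat by ring.
  rewrite (comp_per f m Hper (k*q) 1 s) by lia.
  rewrite <- (comp_split f 1 s (k*m - s)%nat).
  replace (s + (k*m - s))%nat with (k*m)%nat by lia.
  replace (k*m*(q+1))%nat with (k*m*q + k*m)%nat by ring.
  rewrite (comp_split f 1 (k*m*q) (k*m)).
  replace (1 + k*m*q)%nat with (1 + m*(k*q))%nat by ring.
  rewrite (comp_per f m Hper (k*q) 1 (k*m)) by lia.
  reflexivity.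
Qed.

Theorem mainTheorem12 (X : Type) (d : X -> X -> R) (f : nat -> X -> X) (m : nat)
  (Hd : is_metric d) (Hcpt : is_compact d)
  (Hm : (1 <= m)%nat)
  (Hcomm : commutative_seq f) (Hper : periodic_seq f m)
  (Hcont : forall n, (1 <= n)%nat -> continuous_map d (f n))
  (Hsurj : forall n, (1 <= n)%nat -> surjective_map (f n)) :
  weakly_mixing d f <-> (forall k, (1 <= k)%nat -> weakly_mixing d (block_seq f k)).
Proof.
  split.
  - intros Hwm k Hk U1 U2 V1 V2 HU1 HU2 HV1 HV2 eU1 eU2 eV1 eV2.
    assert (HL : (1 <= k*m)%nat) by nia.
    assert (Hnop : forall V, nopen d V -> forall s,
               nopen d (fun x => V (comp f (1+s) (k*m - s) x))).
    { intros V [HV [y Vy]] s. split.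
      - apply open_pre; [apply cont_comp; auto; lia | auto].
      - destruct (surj_comp f Hsurj (1+s) (k*m-s) y ltac:(lia)) as [x Hx].
        exists x. rewrite Hx. auto. }
    destruct (family d f Hcomm Hcont Hwm (fun _ => U1)
                (fun s x => V1 (comp f (1+s) (k*m - s) x))
                (fun _ => conj HU1 eU1) (Hnop V1 (conj HV1 eV1)) U1 V1
                (conj HU1 eU1) (conj HV1 eV1) (k*m)%nat)
      as [A1 [B1 [HA1 [HB1 [_ F1]]]]].
    destruct (family d f Hcomm Hcont Hwm (fun _ => U2)
                (fun s x => V2 (comp f (1+s) (k*m - s) x))
                (fun _ => conj HU2 eU2) (Hnop V2 (conj HV2 eV2)) A1 B1
                HA1 HB1 (k*m)%nat)
      as [A2 [B2 [[HA2 eA2] [[HB2 eB2] [G1 F2]]]]].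
    destruct (Hwm A2 A2 B2 B2 HA2 HA2 HB2 HB2 eA2 eA2 eB2 eB2)
      as [n [Hn [Hh _]]].
    assert (Hqs : exists q s, n = (k*m*q + s)%nat /\ (s < k*m)%nat).
    { exists (n / (k*m))%nat, (n mod (k*m))%nat. split.
      - apply Nat.div_mod; lia.
      - apply Nat.mod_upper_bound; lia. }
    destruct Hqs as [q [s [Hnq Hs]]].
    destruct (F1 s Hs n (G1 n Hh)) as [x1 [Ux1 Vx1]].
    destruct (F2 s Hs n Hh) as [x2 [Ux2 Vx2]].
    exists ((q+1)*m)%nat. split; [nia|].
    rewrite Hnq in Vx1, Vx2. simpl in Vx1, Vx2.
    rewrite shift_id in Vx1, Vx2 by (auto; lia).
    split; [exists x1 | exists x2]; split; auto; rewrite block_comp;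
      replace (k*((q+1)*m))%nat with (k*m*(q+1))%nat by ring; auto.
  - intros H U1 U2 V1 V2 HU1 HU2 HV1 HV2 eU1 eU2 eV1 eV2.
    destruct (H 1%nat (le_n 1) U1 U2 V1 V2 HU1 HU2 HV1 HV2 eU1 eU2 eV1 eV2)
      as [n [Hn [[x1 [A1 B1]] [x2 [A2 B2]]]]].
    rewrite block_comp, Nat.mul_1_l in B1, B2.
    exists n; split; [auto | split; [exists x1 | exists x2]; auto].
Qed.
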